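(* Let \(\mathbb{T} = (T, \mu)\) be a semimonad on \(\mathbf{Set}\) and let \(k \geq 1\). The assignment \((A,(\alpha_i)_{i=1}^k) \mapsto \mathrm{Role}_\mathbb{T}(A,(\alpha_i)_{i=1}^k)\) extends to a functor \[\mathrm{Role}_\mathbb{T} \colon k\mathbf{Coalg}(T)_\mathsf{PR} \to \mathbf{SGrp}_\mathsf{Q}.\] That is, every positional reduction of \(k\)-relational \(T\)-coalgebras induces a surjective semigroup homomorphism between the corresponding semigroups of roles, functorially.
   Context: A semimonad on \(\mathbf{Set}\) is a pair \((T,\mu)\) with \(T\colon \mathbf{Set}\to\mathbf{Set}\) a functor and \(\mu\colon TT\Rightarrow T\) a natural transformation with \(\mu\circ T\mu = \mu \circ \mu_T\). A \(T\)-coalgebra is a set \(A\) with a function \(\alpha\colon A \to T(A)\); a homomorphism \((A,\alpha)\to(A',\alpha')\) is a function \(f\colon A\to A'\) with \(\alpha'\circ f = T(f)\circ \alpha\). A \(k\)-relational \(T\)-coalgebra is a pair \((A,(\alpha_i)_{i=1}^k)\) of a set \(A\) and \(k\) \(T\)-coalgebra structures \(\alpha_i\colon A\to T(A)\); a map \((A,(\alpha_i))\to(A',(\alpha'_i))\) is a function \(A\to A'\) that is a \(T\)-coalgebra homomorphism \((A,\alpha_i)\to(A',\alpha'_i)\) for each \(i\). A positional reduction is such a map whose underlying function is surjective; \(k\mathbf{Coalg}(T)_\mathsf{PR}\) denotes the category of \(k\)-relational \(T\)-coalgebras and positional reductions. The Kleisli composite of \(\beta\colon A\to T(A)\) after \(\alpha\colon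 A \to T(A)\) is \(\beta \ast \alpha = \mu_A\circ T(\beta)\circ\alpha\colon A\to T(A)\); this makes the set of all \(T\)-coalgebra structures on \(A\) a semigroup \(\mathbf{Set}_\mathbb{T}(A,A)\). The semigroup of roles \(\mathrm{Role}_\mathbb{T}(A,(\alpha_i)_{i=1}^k)\) is the sub-semigroup of \(\mathbf{Set}_\mathbb{T}(A,A)\) generated by \(\alpha_1,\dots,\alpha_k\). \(\mathbf{SGrp}_\mathsf{Q}\) is the category of semigroups and surjective semigroup homomorphisms. *)

(* Defs.v *)
From mathcomp Require Import all_boot.
Set Implicit Arguments.
Unset Strict Implicit.
Unset Printing Implicit Defensive.

Record semimonad := Semimonad {
  Tobj :> Type -> Type;
  Tmap : forall A B : Type, (A -> B) -> Tobj A -> Tobj B;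
  Tmap_id : forall (A : Type) (x : Tobj A), Tmap (fun a : A => a) x = x;
  Tmap_comp : forall (A B C : Type) (f : A -> B) (g : B -> C) (x : Tobj A),
      Tmap (fun a => g (f a)) x = Tmap g (Tmap f x);
  mu : forall A : Type, Tobj (Tobj A) -> Tobj A;
  mu_natural : forall (A B : Type) (f : A -> B) (x : Tobj (Tobj A)),
      mu (Tmap (Tmap f) x) = Tmap f (mu x);
  mu_assoc : forall (A : Type) (x : Tobj (Tobj (Tobj A))),
      mu (Tmap (@mu A) x) = mu (mu x)
}.

Section Defs.
Variable M : semimonad.

Definition kcomp (A : Type) (beta alpha : A -> M A) : A -> M A :=
  fun a => mu (Tmap beta (alpha a)).

Definition coalg_hom (A A' : Type) (alpha : A -> M A) (alpha' : A' -> M A')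
  (f : A -> A') : Prop :=
  forall a : A, alpha' (f a) = Tmap f (alpha a).

Definition pos_red (k : nat) (A A' : Type) (al : 'I_k -> A -> M A)
  (al' : 'I_k -> A' -> M A') (f : A -> A') : Prop :=
  (forall y : A', exists x : A, f x = y) /\
  (forall i : 'I_k, coalg_hom (al i) (al' i) f).

Inductive in_role (k : nat) (A : Type) (al : 'I_k -> A -> M A) :
  (A -> M A) -> Prop :=
| in_role_gen : forall i : 'I_k, in_role al (al i)
| in_role_comp : forall beta gamma : A -> M A,
    in_role al beta -> in_role al gamma -> in_role al (kcomp beta gamma).

Definition Role (k : nat) (A : Type) (al : 'I_k -> A -> M A) : Type :=
  {beta : A -> M A | in_role al beta}.

Definition role_mul (k : nat) (A : Type) (al : 'I_k -> A -> M A)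
  (b c : Role al) : Role al :=
  exist _ (kcomp (proj1_sig b) (proj1_sig c))
        (in_role_comp (proj2_sig b) (proj2_sig c)).

End Defs.

(* Main.v *)
Require Import Defs.
From mathcomp Require Import all_boot.

From Stdlib Require Import ClassicalEpsilon FunctionalExtensionality ProofIrrelevance.
Set Implicit Arguments.

Lemma hom_kcomp (M : semimonad) (A A' : Type) (f : A -> A')
  (b c : A -> M A) (b' c' : A' -> M A') :
  coalg_hom b b' f -> coalg_hom c c' f -> coalg_hom (kcomp b c) (kcomp b' c') f.
Proof.
move=> hb hc a; rewrite /kcomp hc -Tmap_comp.
have -> : (fun x => b' (f x)) = (fun x => Tmap f (b x)).
  by apply: functional_extensionality => x; rewrite hb.
by rewrite Tmap_comp mu_natural.
Qed.

Lemma img_ex (M : semimonad) k A A' (al : 'I_k -> A -> M A) (al' : 'I_k -> A' -> M A')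
  (f : A -> A') (hf : pos_red al al' f) (b : Role al) :
  exists b' : Role al', coalg_hom (proj1_sig b) (proj1_sig b') f.
Proof.
case: b => beta /= H; elim: H => [i|x y _ [x' hx] _ [y' hy]].
  by exists (exist _ (al' i) (in_role_gen al' i)); apply: (proj2 hf).
exists (role_mul x' y'); exact: hom_kcomp.
Qed.

Lemma img_uniq (M : semimonad) k A A' (al' : 'I_k -> A' -> M A')
  (f : A -> A') (hs : forall y, exists x, f x = y) (beta : A -> M A) (b1 b2 : Role al') :
  coalg_hom beta (proj1_sig b1) f -> coalg_hom beta (proj1_sig b2) f -> b1 = b2.
Proof.
case: b1 => x1 p1; case: b2 => x2 p2 /= h1 h2.
have e : x1 = x2.
  apply: functional_extensionality => y; case: (hs y) => x <-.
  by rewrite h1 h2.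
subst x2; by rewrite (proof_irrelevance _ p1 p2).
Qed.

Lemma pre_ex (M : semimonad) k A A' (al : 'I_k -> A -> M A) (al' : 'I_k -> A' -> M A')
  (f : A -> A') (hf : pos_red al al' f) (b' : Role al') :
  exists b : Role al, coalg_hom (proj1_sig b) (proj1_sig b') f.
Proof.
case: b' => beta /= H; elim: H => [i|x y _ [x' hx] _ [y' hy]].
  by exists (exist _ (al i) (in_role_gen al i)); apply: (proj2 hf).
exists (role_mul x' y'); exact: hom_kcomp.
Qed.

Definition Fimg (M : semimonad) k A A' (al : 'I_k -> A -> M A) (al' : 'I_k -> A' -> M A')
  (f : A -> A') (hf : pos_red al al' f) (b : Role al) : Role al' :=
  proj1_sig (constructive_indefinite_description _ (img_ex hf b)).

Lemma Fimg_spec (M : semimonad) k A A' (al : 'I_k -> A -> M A) (al' : 'I_k -> A' -> M A')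
  (f : A -> A') (hf : pos_red al al' f) (b : Role al) :
  coalg_hom (proj1_sig b) (proj1_sig (Fimg hf b)) f.
Proof. rewrite /Fimg; exact: (proj2_sig (constructive_indefinite_description _ (img_ex hf b))). Qed.

Unset Implicit Arguments.
Theorem theorem5p6 (M : semimonad) (k : nat) (hk : 0 < k) :
  exists F : forall (A A' : Type) (al : 'I_k -> A -> M A)
                    (al' : 'I_k -> A' -> M A') (f : A -> A'),
               pos_red al al' f -> Role al -> Role al',
    (* each F f is a semigroup homomorphism *)
    (forall A A' al al' f (hf : @pos_red M k A A' al al' f) (b c : Role al),
        F A A' al al' f hf (role_mul b c) =
        role_mul (F A A' al al' f hf b) (F A A' al al' f hf c)) /\
    (* each F f is surjective *)
    (forall A A' al al' f (hf : @pos_red M k A A' al al' f) (b' : Role al'),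
        exists b : Role al, F A A' al al' f hf b = b') /\
    (* F f is induced by f: f is a coalgebra homomorphism beta -> F f beta *)
    (forall A A' al al' f (hf : @pos_red M k A A' al al' f) (b : Role al),
        coalg_hom (proj1_sig b) (proj1_sig (F A A' al al' f hf b)) f) /\
    (* functoriality: identities *)
    (forall A al (hid : @pos_red M k A A al al (fun a => a)) (b : Role al),
        F A A al al (fun a => a) hid b = b) /\
    (* functoriality: composition *)
    (forall A A' A'' al al' al'' (f : A -> A') (g : A' -> A'')
            (hf : @pos_red M k A A' al al' f) (hg : pos_red al' al'' g)
            (hgf : pos_red al al'' (fun a => g (f a))) (b : Role al),
        F A A'' al al'' (fun a => g (f a)) hgf b =
        F A' A'' al' al'' g hg (F A A' al al' f hf b)).
Proof.
exists (@Fimg M k); split; last split; last split; last split.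
- move=> A A' al al' f hf b c; apply: (img_uniq (proj1 hf)); first exact: Fimg_spec.
  apply: hom_kcomp; exact: Fimg_spec.
- move=> A A' al al' f hf b'; case: (pre_ex hf b') => b hb; exists b.
  apply: (img_uniq (proj1 hf)); [exact: Fimg_spec | exact: hb].
- move=> *; exact: Fimg_spec.
- move=> A al hid b; apply: (img_uniq (proj1 hid)); first exact: Fimg_spec.
  by move=> a; rewrite Tmap_id.
- move=> A A' A'' al al' al'' f g hf hg hgf b.
  apply: (img_uniq (proj1 hgf)); first exact: Fimg_spec.
  by move=> a /=; rewrite (Fimg_spec hg _ (f a)) (Fimg_spec hf _ a) -Tmap_comp.
Qed.
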